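(* The validation error at $\tilde C$ satisfies $$E_v(w^*_{\tilde C})\ge \frac1{n'}\Big(\#\{i:y'_i=+1,\ \hat w^\top x'_i+\delta(x'_i)<0\}+\#\{i:y'_i=-1,\ \hat w^\top x'_i-\gamma(x'_i)>0\}\Big)$$ and $$E_v(w^*_{\tilde C})\le 1-\frac1{n'}\Big(\#\{i:y'_i=+1,\ \hat w^\top x'_i-\gamma(x'_i)\ge0\}+\#\{i:y'_i=-1,\ \hat w^\top x'_i+\delta(x'_i)\le 0\}\Big).$$
   Context: Let $\{(x_i,y_i)\}_{i=1}^n\subset\mathbb R^d\times\{-1,1\}$ be a training set and $\{(x'_i,y'_i)\}_{i=1}^{n'}\subset\mathbb R^d\times\{-1,1\}$ a validation set. Let $\ell:\{-1,1\}\times\mathbb R\to\mathbb R$ be convex in its second argument, and set $\ell_i(w):=\ell(y_i,w^\top x_i)$. For $C>0$ let $w^*_C$ be the (unique) minimizer over $w\in\mathbb R^d$ of $P_C(w)=\frac12\|w\|^2+C\sum_{i=1}^n\ell_i(w)$. The validation error of $w\in\mathbb R^d$ is $E_v(w):=\frac1{n'}\#\{i\in\{1,\dots,n'\}: y'_iw^\top x'_i<0\}$ (a score exactly $0$ counts as correct). Fix $\tilde C>0$ and an arbitrary $\hat w\in\mathbb R^d$; for each $i$ let $\xi_i\in\partial\ell_i(\hat w)$, and set $g:=\hat w+\tilde C\sum_{i=1}^n\xi_i$. For $x\in\mathbb R^d$ define $\gamma(x):=\frac12(\|g\|\|x\|+g^\top x)$, $\delta(x):=\frac12(\|g\|\|x\|-g^\top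 x)$. *)

(* Defs.v *)
From HB Require Import structures.
From mathcomp Require Import all_boot all_order all_algebra.
Set Implicit Arguments. Unset Strict Implicit. Unset Printing Implicit Defensive.
Import Order.TTheory GRing.Theory Num.Theory.
Local Open Scope ring_scope.

Definition dotv (R : rcfType) (d : nat) (u v : 'rV[R]_d) : R :=
  \sum_(k < d) u 0 k * v 0 k.

Definition normv (R : rcfType) (d : nat) (u : 'rV[R]_d) : R :=
  Num.sqrt (dotv u u).

Definition convex_fun (R : rcfType) (f : R -> R) : Prop :=
  forall (a b t : R), 0 <= t -> t <= 1 ->
    f (t * a + (1 - t) * b) <= t * f a + (1 - t) * f b.

Definition subgradient (R : rcfType) (d : nat) (f : 'rV[R]_d -> R)
  (w0 xi : 'rV[R]_d) : Prop :=
  forall w, f w0 + dotv xi (w - w0) <= f w.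

Definition primal (R : rcfType) (d n : nat) (loss : R -> R -> R)
  (x : 'I_n -> 'rV[R]_d) (y : 'I_n -> R) (C : R) (w : 'rV[R]_d) : R :=
  (normv w) ^+ 2 / 2 + C * \sum_(i < n) loss (y i) (dotv w (x i)).

Definition val_err (R : rcfType) (d n' : nat)
  (x' : 'I_n' -> 'rV[R]_d) (y' : 'I_n' -> R) (w : 'rV[R]_d) : R :=
  #|[set i : 'I_n' | y' i * dotv w (x' i) < 0]|%:R / n'%:R.

Definition gam (R : rcfType) (d : nat) (g x : 'rV[R]_d) : R :=
  (normv g * normv x + dotv g x) / 2.
Definition del (R : rcfType) (d : nat) (g x : 'rV[R]_d) : R :=
  (normv g * normv x - dotv g x) / 2.

(* Main.v *)
Require Import Defs.
From HB Require Import structures.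
From mathcomp Require Import all_boot all_order all_algebra.
From mathcomp Require Import ring lra.
Import Order.TTheory GRing.Theory Num.Theory.
Local Open Scope ring_scope.
Section Dot.
Context {R : rcfType} {d : nat}.
Implicit Types (u v w : 'rV[R]_d).

Lemma dotvC u v : dotv u v = dotv v u.
Proof. by apply: eq_bigr => k _; rewrite mulrC. Qed.

Lemma dotvDl u v w : dotv (u + v) w = dotv u w + dotv v w.
Proof. by rewrite /dotv -big_split; apply: eq_bigr => k _; rewrite !mxE mulrDl. Qed.

Lemma dotvZl a u w : dotv (a *: u) w = a * dotv u w.
Proof. by rewrite /dotv mulr_sumr; apply: eq_bigr => k _; rewrite !mxE mulrA. Qed.

Lemma dotvNl u w : dotv (- u) w = - dotv u w.
Proof. by rewrite -scaleN1r dotvZl mulN1r. Qed.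

Lemma dotvBl u v w : dotv (u - v) w = dotv u w - dotv v w.
Proof. by rewrite dotvDl dotvNl. Qed.

Lemma dotvDr u v w : dotv w (u + v) = dotv w u + dotv w v.
Proof. by rewrite !(dotvC w) dotvDl. Qed.
Lemma dotvZr a u w : dotv w (a *: u) = a * dotv w u.
Proof. by rewrite !(dotvC w) dotvZl. Qed.
Lemma dotvBr u v w : dotv w (u - v) = dotv w u - dotv w v.
Proof. by rewrite !(dotvC w) dotvBl. Qed.

Lemma dotv_suml (I : finType) (f : I -> 'rV[R]_d) w :
  dotv (\sum_i f i) w = \sum_i dotv (f i) w.
Proof.
rewrite /dotv exchange_big /=; apply: eq_bigr => k _.
by rewrite summxE mulr_suml.
Qed.

Lemma sq_ge0 (a : R) : 0 <= a * a.
Proof. by rewrite -expr2 sqr_ge0. Qed.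

Lemma dotv_ge0 u : 0 <= dotv u u.
Proof. by apply: sumr_ge0 => k _; apply: sq_ge0. Qed.

Lemma normv2 u : normv u ^+ 2 = dotv u u.
Proof. by rewrite /normv sqr_sqrtr // dotv_ge0. Qed.

Lemma normv_ge0 u : 0 <= normv u.
Proof. exact: sqrtr_ge0. Qed.

Lemma dotv_eq0 u : dotv u u = 0 -> forall k, u 0 k = 0.
Proof.
move=> h k; have := h; rewrite /dotv (bigD1 k) //= => /eqP.
rewrite paddr_eq0 ?sq_ge0 //; first by case/andP; rewrite mulf_eq0 orbb => /eqP.
by apply: sumr_ge0 => j _; apply: sq_ge0.
Qed.

Lemma CS2 u v : dotv u v ^+ 2 <= dotv u u * dotv v v.
Proof.
have [B0|Bp] := eqVneq (dotv v v) 0.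
  have -> : dotv u v = 0.
    by rewrite /dotv big1 // => k _; rewrite (@dotv_eq0 v B0 k) mulr0.
  by rewrite B0 mulr0 expr0n.
have Bg : 0 < dotv v v by rewrite lt_def Bp dotv_ge0.
set A := dotv u u; set B := dotv v v; set C := dotv u v.
have h := @dotv_ge0 (B *: u - C *: v).
rewrite !dotvBl !dotvBr !dotvZl !dotvZr -/A -/B -/C (dotvC v u) -/C in h.
have : 0 <= B * (A * B - C ^+ 2) by move: h; congr (_ <= _); ring.
by rewrite pmulr_rge0 // subr_ge0 mulrC.
Qed.

Lemma CS u v : dotv u v <= normv u * normv v.
Proof.
apply: le_trans (ler_norm _) _.
rewrite -(@ler_pXn2r _ 2) // ?nnegrE ?normr_ge0 ?mulr_ge0 ?normv_ge0 //.
by rewrite exprMn !normv2 real_normK ?num_real // CS2.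
Qed.

Lemma dotv_quad (p q : 'rV[R]_d) (s : R) :
  dotv (p - s *: q) (p - s *: q) = dotv p p - 2 * s * dotv p q + s ^+ 2 * dotv q q.
Proof.
rewrite !dotvBl !dotvBr !dotvZl !dotvZr (dotvC q p); ring.
Qed.
End Dot.
Lemma dotv_add (R : rcfType) d (p q : 'rV[R]_d) :
  dotv (p + q) (p + q) = dotv p p + 2 * dotv p q + dotv q q.
Proof. rewrite !dotvDl !dotvDr (dotvC q p); ring. Qed.

Lemma key (R : rcfType) (d n : nat)
  (x : 'I_n -> 'rV[R]_d) (y : 'I_n -> R)
  (loss : R -> R -> R)
  (hy : forall i, y i = 1 \/ y i = -1)
  (hconv : forall yl : R, (yl = 1 \/ yl = -1) -> convex_fun (loss yl))
  (Ct : R) (hCt : 0 < Ct)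
  (wstar : 'rV[R]_d)
  (hmin : forall w, primal loss x y Ct wstar <= primal loss x y Ct w)
  (what : 'rV[R]_d) (xi : 'I_n -> 'rV[R]_d)
  (hxi : forall i, subgradient (fun w => loss (y i) (dotv w (x i))) what (xi i)) :
  dotv (what + Ct *: \sum_(i < n) xi i) (wstar - what)
   + dotv (wstar - what) (wstar - what) <= 0.
Proof.
set g := what + _.
set P := primal loss x y Ct.
set L := fun w => \sum_(i < n) loss (y i) (dotv w (x i)).
have PE w : P w = dotv w w / 2 + Ct * L w by rewrite /P /primal normv2.
have A w : P what + dotv g (w - what) + dotv (w - what) (w - what) / 2 <= P w.
  rewrite !PE.
  have hs : L what + dotv (\sum_(i < n) xi i) (w - what) <= L w.
    rewrite dotv_suml /L -big_split; apply: ler_sum => i _; exact: hxi.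
  have hq : dotv w w = dotv what what + 2 * dotv what (w - what)
                       + dotv (w - what) (w - what).
    by rewrite -{1 2}(subrK what w) addrC dotv_add (dotvC (w - what)).
  have hg : dotv g (w - what) = dotv what (w - what)
                                + Ct * dotv (\sum_(i < n) xi i) (w - what).
    by rewrite /g dotvDl dotvZl.
  rewrite hq hg.
  have hs' := ler_wpM2l (ltW hCt) hs.
  rewrite mulrDr in hs'.
  set a := dotv what what in hs' *; set b := dotv what (w - what).
  set c := dotv (w - what) (w - what).
  set e := dotv (\sum_(i < n) xi i) (w - what) in hs' *.
  set l1 := L what in hs' *; set l2 := L w in hs' *.
  lra.
set u := wstar - what.
set D := dotv u u.
have Dge0 : 0 <= D by apply: dotv_ge0.
have B t : 0 <= t -> t <= 1 ->
    P wstar <= t * P what + (1 - t) * P wstar - t * (1 - t) * D / 2.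
  move=> t0 t1.
  apply: le_trans (hmin (wstar - t *: u)) _; rewrite -/P !PE.
  have hw : what = wstar - 1 *: u by rewrite scale1r /u opprB addrC subrK.
  rewrite dotv_quad {1 2}hw dotv_quad.
  have hL : L (wstar - t *: u) <= t * L what + (1 - t) * L wstar.
    rewrite /L !mulr_sumr -big_split; apply: ler_sum => i _ /=.
    have -> : dotv (wstar - t *: u) (x i)
       = t * dotv what (x i) + (1 - t) * dotv wstar (x i).
      by rewrite /u dotvBl dotvZl dotvBl; ring.
    exact: hconv.
  have hL' := ler_wpM2l (ltW hCt) hL.
  rewrite mulrDr in hL'.
  set a := dotv wstar wstar; set b := dotv wstar u.
  set l1 := L what in hL' *; set l2 := L wstar in hL' *.
  set l3 := L _ in hL' *.
  rewrite -/D.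
  apply: le_trans (_ : _ <= (a - 2 * t * b + t ^+ 2 * D) / 2
       + (Ct * (t * l1) + Ct * ((1 - t) * l2))) _; first by rewrite lerD2l.
  by rewrite le_eqVlt; apply/orP; left; apply/eqP; ring.
have C t : 0 < t -> t <= 1 -> dotv g u + D <= t * D / 2.
  move=> t0 t1; have hB := B t (ltW t0) t1; have hA := A wstar; rewrite -/u -/D in hA.
  set p1 := P what in hA hB *; set p2 := P wstar in hA hB *.
  have h : t * (p2 - p1 + (1 - t) * D / 2) <= 0.
    apply: le_trans (_ : _ <= p2 - (t * p1 + (1 - t) * p2 - t * (1 - t) * D / 2)) _.
      by rewrite le_eqVlt; apply/orP; left; apply/eqP; ring.
    by rewrite subr_le0.
  rewrite pmulr_rle0 // in h.
  have : dotv g u + D / 2 + (1 - t) * D / 2 <= 0 by lra.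
  set e := dotv g u; move=> h2.
  have -> : t * D / 2 = D / 2 - (1 - t) * D / 2 by ring.
  set q := (1 - t) * D / 2 in h2 *.
  lra.
rewrite leNgt; apply/negP => he.
set e := dotv g u + D in he C.
have De : 0 < D + e by lra.
have t0 : 0 < e / (D + e) by rewrite divr_gt0.
have t1 : e / (D + e) <= 1 by rewrite ler_pdivrMr // mul1r; lra.
have h := C _ t0 t1.
have h2 : e / (D + e) * D <= e.
  rewrite mulrAC ler_pdivrMr // ler_pM2l //; lra.
have : e <= e / 2.
  apply: le_trans h _; rewrite ler_pM2r //; lra.
lra.
Qed.
Lemma normvN (R : rcfType) d (v : 'rV[R]_d) : normv (- v) = normv v.
Proof. by rewrite /normv dotvNl (dotvC v) dotvNl opprK. Qed.

Lemma ball_bounds (R : rcfType) d (what wstar g z : 'rV[R]_d) :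
  dotv g (wstar - what) + dotv (wstar - what) (wstar - what) <= 0 ->
  dotv wstar z <= dotv what z + del g z /\ dotv what z - gam g z <= dotv wstar z.
Proof.
move=> hk.
set u := wstar - what in hk.
set v := u + (1 / 2 : R) *: g.
have hv : dotv v v <= dotv g g / 4.
  rewrite /v dotv_add !dotvZl !dotvZr (dotvC u g).
  set a := dotv g u in hk *; set D := dotv u u in hk *; set G := dotv g g.
  have -> : G / 4 = 1 / 2 * (1 / 2 * G) by field.
  have -> : D + 2 * (1 / 2 * a) = D + a by field.
  lra.
have hn : normv v <= normv g / 2.
  rewrite -(@ler_pXn2r _ 2) // ?nnegrE ?divr_ge0 ?normv_ge0 //.
  rewrite normv2 expr_div_n normv2; apply: le_trans hv _.
  by rewrite le_eqVlt; apply/orP; left; apply/eqP; field.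
have hz : normv v * normv z <= normv g / 2 * normv z by rewrite ler_wpM2r ?normv_ge0.
have eu : dotv wstar z = dotv what z + dotv v z - dotv g z / 2.
  by rewrite /v /u dotvDl dotvZl dotvBl; field.
have c1 := CS v z.
have c2 := CS (- v) z; rewrite normvN dotvNl in c2.
rewrite /del /gam eu.
set a := dotv v z in c1 c2 *; set b := normv v * normv z in c1 c2 hz *.
set c := normv g / 2 * normv z in hz.
have -> : normv g * normv z = 2 * c by rewrite /c; field.
set gz := dotv g z.
have -> : (2 * c - gz) / 2 = c - gz / 2 by field.
have -> : (2 * c + gz) / 2 = c + gz / 2 by field.
lra.
Qed.

Lemma card_disjU (T : finType) (A B : {set T}) :
  A :&: B = set0 -> #|A :|: B| = (#|A| + #|B|)%N.
Proof. by move=> h; rewrite -cardsUI h cards0 addn0. Qed.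

Theorem corollary2 (R : rcfType) (d n n' : nat)
  (x : 'I_n -> 'rV[R]_d) (y : 'I_n -> R)
  (x' : 'I_n' -> 'rV[R]_d) (y' : 'I_n' -> R)
  (loss : R -> R -> R)
  (hy : forall i, y i = 1 \/ y i = -1)
  (hy' : forall i, y' i = 1 \/ y' i = -1)
  (hconv : forall yl : R, (yl = 1 \/ yl = -1) -> convex_fun (loss yl))
  (Ct : R) (hCt : 0 < Ct)
  (wstar : 'rV[R]_d)
  (hmin : forall w, primal loss x y Ct wstar <= primal loss x y Ct w)
  (what : 'rV[R]_d) (xi : 'I_n -> 'rV[R]_d)
  (hxi : forall i, subgradient (fun w => loss (y i) (dotv w (x i))) what (xi i)) :
  let g := what + Ct *: \sum_(i < n) xi i in
  (#|[set i : 'I_n' | (y' i == 1) && (dotv what (x' i) + del g (x' i) < 0)]|%:R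
   + #|[set i : 'I_n' | (y' i == -1) && (dotv what (x' i) - gam g (x' i) > 0)]|%:R)
   / n'%:R <= val_err x' y' wstar
  /\
  val_err x' y' wstar <=
  1 - (#|[set i : 'I_n' | (y' i == 1) && (dotv what (x' i) - gam g (x' i) >= 0)]|%:R
   + #|[set i : 'I_n' | (y' i == -1) && (dotv what (x' i) + del g (x' i) <= 0)]|%:R)
   / n'%:R.
Proof.
move=> g.
have hk := @key R d n x y loss hy hconv Ct hCt wstar hmin what xi hxi.
have bb z := @ball_bounds R d what wstar g z hk.
rewrite /val_err.
set E := [set i | _ < 0].
set S1 := [set i : 'I_n' | (y' i == 1) && (dotv what (x' i) + del g (x' i) < 0)].
set S2 := [set i : 'I_n' | (y' i == -1) && (dotv what (x' i) - gam g (x' i) > 0)].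
set T1 := [set i : 'I_n' | (y' i == 1) && (dotv what (x' i) - gam g (x' i) >= 0)].
set T2 := [set i : 'I_n' | (y' i == -1) && (dotv what (x' i) + del g (x' i) <= 0)].
have one_m1 : (1 : R) != -1 by apply/eqP => h; have : (0 : R) < 1 by []; lra.
have dS : S1 :&: S2 = set0.
  apply/eqP; rewrite -subset0; apply/subsetP => i; rewrite !inE.
  by case/andP => /andP[/eqP h1 _] /andP[/eqP h2 _]; rewrite h1 in h2; lra.
have dT : T1 :&: T2 = set0.
  apply/eqP; rewrite -subset0; apply/subsetP => i; rewrite !inE.
  by case/andP => /andP[/eqP h1 _] /andP[/eqP h2 _]; rewrite h1 in h2; lra.
have dE : E :&: (T1 :|: T2) = set0.
  apply/eqP; rewrite -subset0; apply/subsetP => i; rewrite !inE.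
  have [b1 b2] := bb (x' i).
  case/andP => hE /orP[/andP[/eqP h1 h]|/andP[/eqP h1 h]]; move: hE; rewrite h1.
    by rewrite mul1r => hE; exfalso; lra.
  by rewrite mulN1r oppr_lt0 => hE; exfalso; lra.
have sS : S1 :|: S2 \subset E.
  apply/subsetP => i; rewrite !inE.
  have [b1 b2] := bb (x' i).
  case/orP => /andP[/eqP h1 h]; rewrite h1.
    by rewrite mul1r; lra.
  by rewrite mulN1r oppr_lt0; lra.
have hinv : 0 <= n'%:R^-1 :> R by rewrite invr_ge0 ler0n.
split.
  rewrite -natrD -(@card_disjU _ _ _ dS) ler_wpM2r // ler_nat.
  exact: subset_leq_card.
have hN : (#|E| + (#|T1| + #|T2|) <= n')%N.
  rewrite -(@card_disjU _ _ _ dT) -(@card_disjU _ _ _ dE).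
  by rewrite -[X in (_ <= X)%N](card_ord n') max_card.
have [n0|n0] := eqVneq (n'%:R : R) 0.
  rewrite n0 invr0 !mulr0 subr0; exact: ler01.
have np : 0 < n'%:R :> R by rewrite lt_def n0 ler0n.
rewrite lerBrDr -mulrDl ler_pdivrMr // mul1r -!natrD ler_nat.
exact: hN.
Qed.
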